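(* Let $\rho\in(0,1)$, $\xi\in\mathbb{R}$, and $H=\frac{1}{2(1-\rho\cos x)}\big(\sin^2x\,(P_x^2+P_y^2)+\xi\big)$ on $(x,y)\in(0,\pi)\times\mathbb{R}$. On a level set $H=E\neq0$, $P_y=L>0$, set $\sigma=\frac1\rho\big(\frac{\xi}{2E}-1\big)$ and $\eta=\frac{\rho E}{L^2}$. If $\eta>0$ and $-1<\sigma<1$, the projection to the $(x,y)$-plane of a trajectory of the Hamiltonian flow on this level set, normalized by a translation in $y$ so that $y=0$ at $x=x_*$, has equation $$\cosh y=\frac{\eta-\cos x}{\sqrt{\eta^2+2\sigma\eta+1}},\qquad x\in(x_*,\pi),$$ where $\cos x_*=\eta-\sqrt{\eta^2+2\sigma\eta+1}$. *)

(* Defs.v *)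
From Stdlib Require Import Reals.
From Coquelicot Require Import Coquelicot.
Open Scope R_scope.

Definition Ham (rho xi : R) (x y px py : R) : R :=
  (sin x ^ 2 * (px ^ 2 + py ^ 2) + xi) / (2 * (1 - rho * cos x)).

Definition ham_traj (rho xi : R) (a b : Rbar) (X Y PX PY : R -> R) : Prop :=
  forall t : R, Rbar_lt a t -> Rbar_lt t b ->
    0 < X t < PI /\
    is_derive X t (Derive (fun p => Ham rho xi (X t) (Y t) p (PY t)) (PX t)) /\
    is_derive Y t (Derive (fun p => Ham rho xi (X t) (Y t) (PX t) p) (PY t)) /\
    is_derive PX t (- Derive (fun q => Ham rho xi q (Y t) (PX t) (PY t)) (X t)) /\
    is_derive PY t (- Derive (fun q => Ham rho xi (X t) q (PX t) (PY t)) (Y t)).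

Definition sigma_of (rho xi E : R) : R := / rho * (xi / (2 * E) - 1).
Definition eta_of (rho E L : R) : R := rho * E / L ^ 2.

(* Main.v *)
Require Import Defs.

From Stdlib Require Import Reals Lra.
From Coquelicot Require Import Coquelicot.
Open Scope R_scope.

Lemma dHpx rho xi x y px py : 0 < rho < 1 ->
  Derive (fun p => Ham rho xi x y p py) px = sin x ^ 2 * px / (1 - rho * cos x).
Proof.
intros Hr. assert (0 < 1 - rho * cos x) by (pose proof (COS_bound x); nra).
apply is_derive_unique. unfold Ham. auto_derive. lra. field. lra.
Qed.

Lemma dHpy rho xi x y px py : 0 < rho < 1 ->
  Derive (fun p => Ham rho xi x y px p) py = sin x ^ 2 * py / (1 - rho * cos x).
Proof.
intros Hr. assert (0 < 1 - rho * cos x) by (pose proof (COS_bound x); nra).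
apply is_derive_unique. unfold Ham. auto_derive. lra. field. lra.
Qed.

Lemma dHx rho xi x y px py : 0 < rho < 1 ->
  Derive (fun q => Ham rho xi q y px py) x =
  (2 * sin x * cos x * (px^2+py^2) * (2*(1-rho*cos x)) - (sin x^2*(px^2+py^2)+xi)*(2*rho*sin x)) / (2*(1-rho*cos x))^2.
Proof.
intros Hr. assert (0 < 1 - rho * cos x) by (pose proof (COS_bound x); nra).
apply is_derive_unique. unfold Ham. auto_derive. lra. field. lra.
Qed.

Lemma between (a b : Rbar) (t1 t2 x : R) : Rbar_lt a t1 -> Rbar_lt t1 b -> Rbar_lt a t2 -> Rbar_lt t2 b ->
  Rmin t1 t2 <= x <= Rmax t1 t2 -> Rbar_lt a x /\ Rbar_lt x b.
Proof.
intros h1 h2 h3 h4 [h5 h6].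
assert (t1 <= x \/ t2 <= x) by (unfold Rmin in h5; destruct Rle_dec; lra).
assert (x <= t1 \/ x <= t2) by (unfold Rmax in h6; destruct Rle_dec; lra).
split.
- destruct H as [H|H]; [apply Rbar_lt_le_trans with t1; [exact h1|exact H] | apply Rbar_lt_le_trans with t2; [exact h3|exact H]].
- destruct H0 as [H0|H0]; [apply Rbar_le_lt_trans with t1; [exact H0|exact h2] | apply Rbar_le_lt_trans with t2; [exact H0|exact h4]].
Qed.

Lemma const_on (f : R -> R) (a b : Rbar) :
  (forall t : R, Rbar_lt a t -> Rbar_lt t b -> is_derive f t 0) ->
  forall t1 t2 : R, Rbar_lt a t1 -> Rbar_lt t1 b -> Rbar_lt a t2 -> Rbar_lt t2 b -> f t2 = f t1.
Proof.
intros Hd t1 t2 h1 h2 h3 h4.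
destruct (MVT_gen f t1 t2 (fun _ => 0)) as [c [_ Hc]].
- intros x Hx. destruct (between a b t1 t2 x h1 h2 h3 h4) as [g1 g2]; [lra|]. auto.
- intros x Hx. destruct (between a b t1 t2 x h1 h2 h3 h4 Hx) as [g1 g2].
  apply derivable_continuous_pt. exists 0. apply is_derive_Reals. auto.
- lra.
Qed.

Lemma alg (rho xi E L eta sigma D s c P : R) : 0 < rho < 1 -> E <> 0 -> 0 < L -> 0 < D ->
  s^2 + c^2 = 1 -> rho*E = eta*L^2 -> xi = 2*E*(1+rho*sigma) -> D^2 = eta^2 + 2*sigma*eta + 1 ->
  (s^2*(P^2+L^2)+xi)/(2*(1-rho*c)) = E ->
  ((eta - c)/D)^2 - (s*P/(L*D))^2 = 1.
Proof.
intros Hr HE HL HD hs hEe hxi hD2 hH.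
assert (hk: 0 < 1 - rho*c) by nra.
assert (hH' : s^2*(P^2+L^2)+xi = 2*E*(1-rho*c)).
{ rewrite <- hH. field. lra. }
assert (hsp: (s*P)^2 = L^2*((eta-c)^2 - D^2)).
{ rewrite hD2. replace ((s*P)^2) with (2*E*(1-rho*c) - xi - s^2*L^2) by (rewrite <- hH'; ring).
  rewrite hxi. replace (s^2) with (1 - c^2) by lra.
  transitivity (-2*(rho*E)*c - 2*(rho*E)*sigma - L^2 + c^2*L^2). ring. rewrite hEe. ring. }
replace ((s*P/(L*D))^2) with ((s*P)^2/(L^2*D^2)) by (field; lra).
rewrite hsp. field. split; lra.
Qed.

Lemma der_K1 (X Y P : R -> R) t dX dY dP eta D L : D <> 0 -> L <> 0 ->
 is_derive X t dX -> is_derive Y t dY -> is_derive P t dP ->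
 is_derive (fun s => ((eta - cos (X s))/D + sin (X s) * P s / (L*D)) * exp (- Y s)) t
 (( (sin (X t) * dX)/D + (cos (X t) * dX * P t + sin (X t) * dP)/(L*D)) * exp(-Y t) - ((eta - cos (X t))/D + sin (X t) * P t/(L*D)) * exp(-Y t) * dY).
Proof.
intros HD HL hX hY hP.
auto_derive.
- repeat split; eexists; eassumption.
- replace (Derive (fun x => X x) t) with dX by (symmetry; now apply is_derive_unique).
  replace (Derive (fun x => Y x) t) with dY by (symmetry; now apply is_derive_unique).
  replace (Derive (fun x => P x) t) with dP by (symmetry; now apply is_derive_unique).
  field. auto.
Qed.

Lemma der_K2 (X Y P : R -> R) t dX dY dP eta D L : D <> 0 -> L <> 0 ->
 is_derive X t dX -> is_derive Y t dY -> is_derive P t dP ->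
 is_derive (fun s => ((eta - cos (X s))/D - sin (X s) * P s / (L*D)) * exp (Y s)) t
 (( (sin (X t) * dX)/D - (cos (X t) * dX * P t + sin (X t) * dP)/(L*D)) * exp(Y t) + ((eta - cos (X t))/D - sin (X t) * P t/(L*D)) * exp(Y t) * dY).
Proof.
intros HD HL hX hY hP.
auto_derive.
- repeat split; eexists; eassumption.
- replace (Derive (fun x => X x) t) with dX by (symmetry; now apply is_derive_unique).
  replace (Derive (fun x => Y x) t) with dY by (symmetry; now apply is_derive_unique).
  replace (Derive (fun x => P x) t) with dP by (symmetry; now apply is_derive_unique).
  field. auto.
Qed.

Lemma exists_mid (a b : Rbar) : Rbar_lt a b -> exists t : R, Rbar_lt a t /\ Rbar_lt t b.
Proof.
intros h. destruct a as [a| |]; destruct b as [b| |]; cbn [Rbar_lt] in *; try tauto.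
- exists ((a+b)/2). split; lra.
- exists (a+1). split; [lra|exact I].
- exists (b-1). split; [exact I|lra].
- exists 0. split; exact I.
Qed.

Lemma alg2 (rho xi E L eta sigma D s c P : R) : 0 < rho < 1 -> 0 < L -> 0 < D ->
  rho*E = eta*L^2 ->
  (s^2*(P^2+L^2)+xi)/(2*(1-rho*c)) = E -> -1 <= c <= 1 ->
  let dX := s^2*P/(1-rho*c) in let dY := s^2*L/(1-rho*c) in
  let dP := - ((2 * s * c * (P^2+L^2) * (2*(1-rho*c)) - (s^2*(P^2+L^2)+xi)*(2*rho*s)) / (2*(1-rho*c))^2) in
  (c*dX*P + s*dP)/(L*D) = (eta - c)/D * dY /\ s*dX/D = s*P/(L*D) * dY.
Proof.
intros Hr HL HD hEe hH hc dX dY dP.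
assert (hk: 0 < 1 - rho*c) by nra.
assert (hH' : s^2*(P^2+L^2)+xi = 2*E*(1-rho*c)).
{ rewrite <- hH. field. lra. }
assert (hE : E = eta*L^2/rho) by (apply (Rmult_eq_reg_l rho); [rewrite hEe; field|]; lra).
split.
- unfold dX, dP, dY. rewrite hH', hE. field. repeat split; lra.
- unfold dX, dY. field. repeat split; lra.
Qed.

Theorem proposition4 (rho xi E L : R) (a b : Rbar) (X Y PX PY : R -> R) :
  0 < rho < 1 ->
  E <> 0 ->
  0 < L ->
  Rbar_lt a b ->
  ham_traj rho xi a b X Y PX PY ->
  (forall t : R, Rbar_lt a t -> Rbar_lt t b ->
     Ham rho xi (X t) (Y t) (PX t) (PY t) = E /\ PY t = L) ->
  0 < eta_of rho E L ->
  -1 < sigma_of rho xi E < 1 ->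
  let eta := eta_of rho E L in
  let sigma := sigma_of rho xi E in
  let D := sqrt (eta ^ 2 + 2 * sigma * eta + 1) in
  exists xstar : R, 0 < xstar < PI /\ cos xstar = eta - D /\
  exists y0 : R, forall t : R, Rbar_lt a t -> Rbar_lt t b ->
    xstar <= X t /\ cosh (Y t - y0) = (eta - cos (X t)) / D.
Proof.
intros Hr HE HL Hab Htr Hlev Heta Hsig eta sigma D.
change (0 < eta) in Heta. change (-1 < sigma < 1) in Hsig.
assert (hEe : rho*E = eta*L^2) by (unfold eta, eta_of; field; lra).
assert (hxi : xi = 2*E*(1+rho*sigma)) by (unfold sigma, sigma_of; field; lra).
assert (hpos : 0 < eta ^ 2 + 2 * sigma * eta + 1) by (pose proof (pow2_ge_0 (eta+sigma)); nra).
assert (hD2 : D^2 = eta ^ 2 + 2 * sigma * eta + 1) by (unfold D; rewrite <- Rsqr_pow2; apply Rsqr_sqrt; lra).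
assert (hD : 0 < D) by (unfold D; apply sqrt_lt_R0; lra).
assert (hb1 : eta - D < 1) by nra.
assert (hb2 : -1 < eta - D) by nra.
assert (hb3 : 1 < eta + D) by nra.
set (F := fun t => (eta - cos (X t))/D).
set (G := fun t => sin (X t) * PX t/(L*D)).
assert (hFG : forall t : R, Rbar_lt a t -> Rbar_lt t b -> F t ^2 - G t ^2 = 1).
{ intros t h1 h2. destruct (Hlev t h1 h2) as [hH hPY]. rewrite hPY in hH.
  apply (alg rho xi E L eta sigma D (sin (X t)) (cos (X t)) (PX t)); auto; try lra.
  rewrite <- !Rsqr_pow2. apply sin2_cos2. }
assert (hF1 : forall t : R, Rbar_lt a t -> Rbar_lt t b -> 1 <= F t).
{ intros t h1 h2. pose proof (hFG t h1 h2). pose proof (COS_bound (X t)).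
  assert (hF : F t = (eta - cos (X t))/D) by reflexivity.
  assert (~ F t <= -1).
  { intro hc. rewrite hF in hc. apply (Rmult_le_compat_r D) in hc; [|lra].
    replace ((eta - cos (X t)) / D * D) with (eta - cos (X t)) in hc by (field; lra). lra. }
  nra. }
set (K1 := fun s => ((eta - cos (X s))/D + sin (X s) * PX s / (L*D)) * exp (- Y s)).
set (K2 := fun s => ((eta - cos (X s))/D - sin (X s) * PX s / (L*D)) * exp (Y s)).
assert (hder : forall t : R, Rbar_lt a t -> Rbar_lt t b -> is_derive K1 t 0 /\ is_derive K2 t 0).
{ intros t h1 h2. destruct (Hlev t h1 h2) as [hH hPY]. rewrite hPY in hH.
  destruct (Htr t h1 h2) as [_ [dXh [dYh [dPh _]]]].
  rewrite hPY, dHpx in dXh by auto. rewrite dHpy, hPY in dYh by auto.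
  rewrite hPY, dHx in dPh by auto.
  destruct (alg2 rho xi E L eta sigma D (sin (X t)) (cos (X t)) (PX t) Hr HL hD hEe hH (COS_bound _)) as [e1 e2].
  split.
  - pose proof (der_K1 X Y PX t _ _ _ eta D L ltac:(lra) ltac:(lra) dXh dYh dPh) as hd.
    match type of hd with is_derive _ _ ?v => replace v with 0 in hd end; [exact hd|].
    rewrite e1, e2. ring.
  - pose proof (der_K2 X Y PX t _ _ _ eta D L ltac:(lra) ltac:(lra) dXh dYh dPh) as hd.
    match type of hd with is_derive _ _ ?v => replace v with 0 in hd end; [exact hd|].
    rewrite e1, e2. ring. }
destruct (exists_mid a b Hab) as [t0 [h01 h02]].
assert (hexp : forall y, exp (- y) * exp y = 1).
{ intro y. rewrite <- exp_plus. replace (- y + y) with 0 by ring. apply exp_0. }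
assert (hK1 : forall t : R, K1 t = (F t + G t) * exp (- Y t)) by (intros; reflexivity).
assert (hK2 : forall t : R, K2 t = (F t - G t) * exp (Y t)) by (intros; reflexivity).
assert (hC : K1 t0 * K2 t0 = 1).
{ rewrite hK1, hK2. transitivity ((F t0 ^ 2 - G t0 ^ 2) * (exp (- Y t0) * exp (Y t0))). ring.
  rewrite hFG, hexp by auto. ring. }
assert (hC1 : 0 < K1 t0).
{ rewrite hK1. apply Rmult_lt_0_compat; [|apply exp_pos].
  pose proof (hFG t0 h01 h02). pose proof (hF1 t0 h01 h02). nra. }
exists (acos (eta - D)). split; [apply acos_bound_lt; lra|]. split; [apply cos_acos; lra|].
exists (- ln (K1 t0)).
intros t h1 h2. split.
- destruct (Htr t h1 h2) as [[hx1 hx2] _].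
  destruct (Rle_lt_dec (acos (eta - D)) (X t)) as [hl|hl]; [exact hl|].
  exfalso. pose proof (acos_bound (eta - D)).
  assert (cos (acos (eta - D)) < cos (X t)) by (apply cos_decreasing_1; lra).
  rewrite cos_acos in H0 by lra.
  pose proof (hF1 t h1 h2). unfold F in H1.
  apply (Rmult_le_compat_r D) in H1; [|lra].
  replace ((eta - cos (X t)) / D * D) with (eta - cos (X t)) in H1 by (field; lra). lra.
- assert (e1 : K1 t = K1 t0) by (apply (const_on K1 a b); auto; intros; apply hder; auto).
  assert (e2 : K2 t = K2 t0) by (apply (const_on K2 a b); auto; intros; apply hder; auto).
  assert (hKt : K2 t0 = / K1 t0) by (apply (Rmult_eq_reg_l (K1 t0)); [rewrite hC; field|]; lra).
  change ((eta - cos (X t)) / D) with (F t).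
  assert (hF : F t = (K1 t * exp (Y t) + K2 t * exp (- Y t)) / 2).
  { rewrite hK1, hK2. pose proof (hexp (Y t)) as hx.
    set (u := exp (- Y t)) in *. set (v := exp (Y t)) in *.
    transitivity ((F t + G t) * (u * v) / 2 + (F t - G t) * (u * v) / 2).
    rewrite hx. field. field. }
  rewrite hF, e1, e2, hKt. unfold cosh.
  replace (Y t - - ln (K1 t0)) with (Y t + ln (K1 t0)) by ring.
  rewrite (exp_plus (Y t) (ln (K1 t0))), (Ropp_plus_distr (Y t)), (exp_plus (- Y t)), (exp_Ropp (ln (K1 t0))), (exp_ln (K1 t0) hC1).
  field. lra.
Qed.
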